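(* Let $\mathcal U$ be a non-principal p-point ultrafilter on $\omega$ and $\mathfrak I=\{\omega\setminus X\mid X\in\mathcal U\}$ its dual ideal. If the Grigorieff forcing $\mathbb P(\mathcal U)$ satisfies Axiom A, then player II has a winning strategy in the game $\mathcal G_{\mathcal U}$.
   Context: Grigorieff forcing: $\mathbb P(\mathcal U)=\{p:\omega\to 2\mid \mathrm{dom}(p)\in\mathfrak I\}$ (partial functions), ordered by $q\le p$ iff $q\supseteq p$. A partial order $(\mathbb P,\le)$ satisfies Axiom A if there are partial orders $\le_n$ ($n\in\omega$) on $\mathbb P$ such that: (i) $p\le_0 q$ implies $p\le q$; (ii) $p\le_{n+1}q$ implies $p\le_n q$; (iii) whenever $p_0\ge_0 p_1\ge_1 p_2\ge_2\cdots$, there is $q\in\mathbb P$ with $q\le_n p_n$ for all $n$; (iv) for every $p\in\mathbb P$, $n\in\omega$ and $\mathbb P$-name $\dot\alpha$ for an ordinal, there are $q\le_n p$ and a countable set $B$ with $q\Vdash\dot\alpha\in B$. The game $\mathcal G_{\mathcal U}$: in round $n$ player I plays $I_n\in\mathfrak I$ and player II responds with a finite $F_n\subseteq I_n$; player I's moves must form a partition $\{I_n\mid n\in\omega\}$ of $\omega$; player II wins iff $\bigcup_n F_n\in\mathcal U$. A p-point ultrafilter is a non-principal ultrafilter $\mathcal U$ on $\omega$ such that for every partition $\{J_n\}$ of $\omega$ with each $J_n\notin\mathcal U$ there is $Y\in\mathcal U$ with $|Y\cap J_n|<\omega$ for all $n$. *)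

(* Defs.v *)
From Stdlib Require Import List.
Import ListNotations.

Definition nset := nat -> Prop.
Definition subset (X Y : nset) : Prop := forall x, X x -> Y x.
Definition finite (X : nset) : Prop := exists l : list nat, forall x, X x -> In x l.

Definition ultrafilter (U : nset -> Prop) : Prop :=
  (forall X Y, U X -> subset X Y -> U Y) /\
  (forall X Y, U X -> U Y -> U (fun x => X x /\ Y x)) /\
  ~ U (fun _ => False) /\
  (forall X, U X \/ U (fun x => ~ X x)).

Definition nonprincipal (U : nset -> Prop) : Prop :=
  forall n : nat, ~ U (fun x => x = n).

(* {J_n} is a partition of omega (pieces may be empty) *)
Definition is_partition (J : nat -> nset) : Prop :=
  (forall m n x, m <> n -> J m x -> J n x -> False) /\
  (forall x, exists n, J n x).

Definition p_point (U : nset -> Prop) : Prop :=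
  ultrafilter U /\ nonprincipal U /\
  forall J : nat -> nset, is_partition J -> (forall n, ~ U (J n)) ->
    exists Y, U Y /\ forall n, finite (fun x => Y x /\ J n x).

Definition dual_ideal (U : nset -> Prop) (Z : nset) : Prop :=
  exists X, U X /\ forall x, Z x <-> ~ X x.

(* Grigorieff forcing P(U): partial functions omega -> 2 with domain in I *)
Definition pdom (p : nat -> option bool) : nset := fun n => p n <> None.

Definition Grig (U : nset -> Prop) : Type :=
  { p : nat -> option bool | dual_ideal U (pdom p) }.

Definition grig_le {U} (q p : Grig U) : Prop :=
  forall n b, proj1_sig p n = Some b -> proj1_sig q n = Some b.

Definition partial_order {P : Type} (R : P -> P -> Prop) : Prop :=
  (forall x, R x x) /\ (forall x y z, R x y -> R y z -> R x z) /\
  (forall x y, R x y -> R y x -> x = y).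

Definition compatible {P : Type} (le : P -> P -> Prop) (p q : P) : Prop :=
  exists r, le r p /\ le r q.

Definition max_antichain {P : Type} (le : P -> P -> Prop) (A : P -> Prop) : Prop :=
  (forall a b, A a -> A b -> a <> b -> ~ compatible le a b) /\
  (forall p, exists a, A a /\ compatible le a p).

Definition countable {T : Type} (B : T -> Prop) : Prop :=
  exists e : T -> nat, forall x y, B x -> B y -> e x = e y -> x = y.

(* A (nice) name for an ordinal: a maximal antichain A together with the value
   f a assigned to each a in A.  q forces "name in B" iff every element of A
   compatible with q is sent into B. *)
Definition forces_in {P T : Type} (le : P -> P -> Prop) (q : P)
    (A : P -> Prop) (f : P -> T) (B : T -> Prop) : Prop :=
  forall a, A a -> compatible le a q -> B (f a).

Definition AxiomA {P : Type} (le : P -> P -> Prop) : Prop :=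
  exists len : nat -> P -> P -> Prop,
    (forall n, partial_order (len n)) /\
    (forall p q, len 0 p q -> le p q) /\
    (forall n p q, len (S n) p q -> len n p q) /\
    (forall ps : nat -> P, (forall n, len n (ps (S n)) (ps n)) ->
        exists q, forall n, len n q (ps n)) /\
    (forall (p : P) (n : nat) (T : Type) (A : P -> Prop) (f : P -> T),
        max_antichain le A ->
        exists q (B : T -> Prop), len n q p /\ countable B /\ forces_in le q A f B).

(* The game G_U. A strategy for II maps the list [I_0; ...; I_n] of I's moves
   so far to II's answer F_n. *)
Definition strategyII := list nset -> nset.

Definition winning_II (U : nset -> Prop) (sigma : strategyII) : Prop :=
  forall Is : nat -> nset,
    (forall n, dual_ideal U (Is n)) -> is_partition Is ->
    let F := fun n => sigma (map Is (seq 0 (S n))) in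
    (forall n, finite (F n) /\ subset (F n) (Is n)) /\
    U (fun x => exists n, F n x).

(* Main.v *)
Require Import Defs.
From Stdlib Require Import List Arith Lia Classical ClassicalEpsilon FunctionalExtensionality ProofIrrelevance.
Import ListNotations.

Section S.
Variable U : nset -> Prop.
Hypothesis HU : ultrafilter U.

Lemma di_ext (Z Z' : nset) : dual_ideal U Z -> (forall x, Z' x <-> Z x) -> dual_ideal U Z'.
Proof.
  intros [X [HX HZ]] H. exists X; split; auto. intro x. rewrite H. apply HZ.
Qed.

Lemma di_union (Z1 Z2 : nset) : dual_ideal U Z1 -> dual_ideal U Z2 ->
  dual_ideal U (fun x => Z1 x \/ Z2 x).
Proof.
  intros [X1 [H1 E1]] [X2 [H2 E2]]. destruct HU as [_ [Hi _]].
  exists (fun x => X1 x /\ X2 x). split; [apply Hi; auto|].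
  intro x. rewrite E1, E2. tauto.
Qed.

Definition ext0 (q : nat -> option bool) (I : nset) (d : nat -> bool) : nat -> option bool :=
  fun x => if excluded_middle_informative (I x) then
     Some (match q x with Some c => c | None => d x end) else None.

Lemma ext0_dom q I d x : pdom (ext0 q I d) x <-> I x.
Proof.
  unfold pdom, ext0. destruct (excluded_middle_informative (I x)); split; intros; auto; try discriminate.
  contradiction.
Qed.

Definition union0 (a q : nat -> option bool) : nat -> option bool :=
  fun x => match a x with Some c => Some c | None => q x end.

Lemma ext_compat (q : Grig U) (I : nset) (HI : dual_ideal U I) d
  (Ha : dual_ideal U (pdom (ext0 (proj1_sig q) I d))) :
  compatible (@grig_le U) (exist (fun p => dual_ideal U (pdom p)) _ Ha : Grig U) q.
Proof.
  destruct q as [q0 Hq]. simpl in *.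
  assert (Hr : dual_ideal U (pdom (union0 (ext0 q0 I d) q0))).
  { apply di_ext with (Z := fun x => I x \/ pdom q0 x). apply di_union; auto.
    intro x. unfold pdom, union0, ext0.
    destruct (excluded_middle_informative (I x)); split; intros; try tauto; try discriminate.
    }
  exists (exist (fun p => dual_ideal U (pdom p)) _ Hr : Grig U). split; unfold grig_le; simpl; intros n b Hb.
  - unfold union0. rewrite Hb. auto.
  - unfold union0, ext0 in *. destruct (excluded_middle_informative (I n)).
    + rewrite Hb. auto.
    + auto.
Qed.

Definition A_of (I : nset) : Grig U -> Prop := fun a => forall x, pdom (proj1_sig a) x <-> I x.

Lemma A_max (I : nset) (HI : dual_ideal U I) : max_antichain (@grig_le U) (A_of I).
Proof.
  split.
  - intros [a0 Ha] [b0 Hb] HA HB Hne [r [Hra Hrb]]. apply Hne.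
    unfold A_of, grig_le, pdom in *; simpl in *.
    assert (a0 = b0).
    { apply functional_extensionality. intro x.
      specialize (HA x); specialize (HB x); specialize (Hra x); specialize (Hrb x).
      destruct (a0 x) as [c|] eqn:E1, (b0 x) as [d|] eqn:E2; auto.
      - rewrite (Hra c eq_refl) in Hrb. rewrite (Hrb d eq_refl). auto.
      - exfalso. apply HB; [apply HA; discriminate | reflexivity].
      - exfalso. apply HA; [apply HB; discriminate | reflexivity]. }
    subst. f_equal. apply proof_irrelevance.
  - intro p.
    assert (Ha : dual_ideal U (pdom (ext0 (proj1_sig p) I (fun _ => false)))).
    { apply di_ext with I; auto. apply ext0_dom. }
    eexists. split; [|apply (ext_compat p I HI _ Ha)].
    intro x. simpl. apply ext0_dom.
Qed.

Lemma unbounded (S : nset) : ~ finite S -> forall N, exists x, N <= x /\ S x.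
Proof.
  intros Hf N. apply NNPP; intro H. apply Hf. exists (seq 0 N). intros x Hx.
  apply in_seq. destruct (le_lt_dec N x); [exfalso; apply H; eauto | lia].
Qed.

Lemma key (len : nat -> Grig U -> Grig U -> Prop)
  (H4 : forall (p : Grig U) (n : nat) (T : Type) (A : Grig U -> Prop) (f : Grig U -> T),
        max_antichain (@grig_le U) A ->
        exists q (B : T -> Prop), len n q p /\ countable B /\ forces_in (@grig_le U) q A f B)
  (p : Grig U) (n : nat) (I : nset) (HI : dual_ideal U I) :
  exists q : Grig U, len n q p /\ finite (fun x => I x /\ proj1_sig q x = None).
Proof.
  destruct (H4 p n (nat -> option bool) (A_of I) (@proj1_sig _ _) (A_max I HI))
    as (q & B & Hq & [e He] & Hf).
  exists q; split; auto.
  apply NNPP; intro Hinf.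
  pose proof (unbounded _ Hinf) as Hub.
  set (g := fun N => proj1_sig (constructive_indefinite_description _ (Hub N))).
  assert (Hg : forall N, N <= g N /\ I (g N) /\ proj1_sig q (g N) = None).
  { intro N. unfold g. destruct (constructive_indefinite_description _ (Hub N)) as [x Hx].
    simpl. tauto. }
  set (h := fix h k := match k with 0 => g 0 | S k' => g (S (h k')) end).
  assert (Hh : forall k, h k < h (S k)).
  { intro k. simpl. destruct (Hg (S (h k))) as [H _]. lia. }
  assert (Hmono : forall k k', k < k' -> h k < h k').
  { intros k k' Hk. induction Hk.
    - apply Hh.
    - specialize (Hh m). lia. }
  assert (Hinj : forall k k', h k = h k' -> k = k').
  { intros k k' E. destruct (lt_eq_lt_dec k k') as [[L|L]|L]; auto.
    - apply Hmono in L. lia.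
    - apply Hmono in L. lia. }
  assert (HS : forall k, I (h k) /\ proj1_sig q (h k) = None).
  { intros [|k]; simpl; apply Hg. }
  set (P := fun x => exists k b, h k = x /\ B b /\ e b = k /\ b x = Some true).
  set (diag := fun x => if excluded_middle_informative (P x) then false else true).
  set (a0 := ext0 (proj1_sig q) I diag).
  assert (Ha : dual_ideal U (pdom a0)).
  { apply di_ext with I; auto. apply ext0_dom. }
  assert (HBa : B a0).
  { apply (Hf (exist (fun p => dual_ideal U (pdom p)) _ Ha : Grig U)).
    - intro x. simpl. apply ext0_dom.
    - apply ext_compat; auto. }
  set (k := e a0). set (x := h k).
  assert (Hax : a0 x = Some (diag x)).
  { unfold a0, ext0. destruct (HS k) as [H1 H2]. fold x in H1, H2.
    destruct (excluded_middle_informative (I x)); [rewrite H2; auto | contradiction]. }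
  revert Hax. unfold diag at 1. destruct (excluded_middle_informative (P x)) as [HP|HP]; intro Hax.
  - destruct HP as (k' & b & E1 & Bb & E2 & E3).
    unfold x in E1. apply Hinj in E1. subst k'. unfold k in E2.
    assert (b = a0) by (apply He; auto). subst b. congruence.
  - apply HP. exists k, a0. repeat split; auto.
    all: try (rewrite Hax; unfold diag; destruct (excluded_middle_informative (P x)); [contradiction|auto]).
Qed.
End S.

Lemma U_full (U : nset -> Prop) : ultrafilter U -> U (fun _ => True).
Proof.
  intros [Hup [_ [_ Hu]]]. destruct (Hu (fun _ => True)) as [H|H]; auto.
  apply Hup with (1 := H). intros x _; auto.
Qed.

Definition step (U : nset -> Prop) (len : nat -> Grig U -> Grig U -> Prop)
  (k : nat) (p : Grig U) (I : nset) : Grig U :=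
  match excluded_middle_informative
    (exists q : Grig U, len k q p /\ (dual_ideal U I -> finite (fun x => I x /\ proj1_sig q x = None)))
  with
  | left H => proj1_sig (constructive_indefinite_description _ H)
  | right _ => p
  end.

Fixpoint runp (U : nset -> Prop) (len : nat -> Grig U -> Grig U -> Prop)
  (k : nat) (p : Grig U) (l : list nset) : Grig U :=
  match l with [] => p | J :: l' => runp U len (S k) (step U len k p J) l' end.

Lemma runp_app U len l : forall k p I,
  runp U len k p (l ++ [I]) = step U len (k + length l) (runp U len k p l) I.
Proof.
  induction l as [|J l IH]; intros k p I; simpl.
  - rewrite Nat.add_0_r. auto.
  - rewrite IH. f_equal. lia.
Qed.

Theorem lemma1 (U : nset -> Prop) :
  p_point U ->
  AxiomA (@grig_le U) ->
  exists sigma : strategyII, winning_II U sigma.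
Proof.
  intros [HU _] (len & Hpo & H0 & HS & Hfus & H4).
  assert (Hp0 : dual_ideal U (pdom (fun _ => None))).
  { exists (fun _ => True). split; [apply U_full; auto|]. intro x; unfold pdom; tauto. }
  set (p0 := exist (fun p => dual_ideal U (pdom p)) _ Hp0 : Grig U).
  exists (fun l x => last l (fun _ => False) x /\ proj1_sig (runp U len 0 p0 l) x = None).
  intros Is HIs HP; cbv zeta.
  set (ps := fun n => runp U len 0 p0 (map Is (seq 0 n))).
  assert (Eps : forall n, runp U len 0 p0 (map Is (seq 0 (S n))) = step U len n (ps n) (Is n)).
  { intro n. rewrite seq_S, map_app. simpl. rewrite runp_app. unfold ps.
    rewrite length_map, length_seq. auto. }
  assert (Elast : forall n, last (map Is (seq 0 (S n))) (fun _ => False) = Is n).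
  { intro n. rewrite seq_S, map_app. simpl. apply last_last. }
  assert (Hstep : forall n, len n (ps (S n)) (ps n) /\
            finite (fun x => Is n x /\ proj1_sig (ps (S n)) x = None)).
  { intro n. unfold ps at 1 3. rewrite Eps. unfold step.
    destruct (excluded_middle_informative _) as [H|H].
    - destruct (constructive_indefinite_description _ H) as [q [Hq1 Hq2]]. simpl. auto.
    - exfalso. apply H. destruct (key U HU len H4 (ps n) n (Is n) (HIs n)) as [q [Hq1 Hq2]].
      eauto. }
  split.
  - intro n. rewrite Elast. fold (ps (S n)). split.
    + apply Hstep.
    + intros x [Hx _]; auto.
  - destruct (Hfus ps (fun n => proj1 (Hstep n))) as [q Hq].
    assert (Hle : forall m n, len m q (ps n) -> grig_le q (ps n)).
    { induction m; intros n H; auto. }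
    destruct (proj2_sig q) as [X [HX EX]].
    destruct HU as [Hup _]. apply Hup with (1 := HX).
    intros x Xx. destruct (proj2 HP x) as [m Hm]. exists m.
    rewrite Elast. fold (ps (S m)). split; auto.
    destruct (proj1_sig (ps (S m)) x) as [b|] eqn:E; auto.
    exfalso. assert (Hd : pdom (proj1_sig q) x).
    { unfold pdom. pose proof (Hle (S m) (S m) (Hq _) x b E) as Hqx. simpl in Hqx. intro Hn. unfold pdom in Hqx. congruence. }
    exact (proj1 (EX x) Hd Xx).
Qed.
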